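(* Let $X$ be a separable Banach space with a $1$-norming FMD $(E_j)$. Let $(\mathcal A_m)_{m\in\mathbb N}$ be an increasing sequence of closed subsets of $\mathcal B_\omega$, each closed under taking tails, and let $\mathcal A=\bigcup_{m}\mathcal A_m$. If Player I has a winning strategy for the $\mathcal A$-game, then there is $m\in\mathbb N$ such that Player I has a winning strategy for the $\mathcal A_m$-game.
   Context: FMD: a sequence $(E_k)$ of finite dimensional subspaces of $X$ with biorthogonal $F_k=\{f\in X^*:f|_{E_j}=0\ \forall j\neq k\}$ such that $\mathrm{span}(E_k)$ is dense, $E_k\cap\overline{\mathrm{span}(E_j:j\neq k)}=\{0\}$ and $(F_k)$ is total; $1$-norming means $\sup\{f(x):f\in\mathrm{span}(F_j),\|f\|\le1\}\ge\|x\|$. $c_{00}(E_j)=\mathrm{span}(E_j:j\in\mathbb N)$; $\mathrm{supp}_E(x)$ is the set of $j$ with nonzero $E_j$-component of $x$, and $\mathrm{rg}_E(x)$ the smallest interval containing it. $\mathcal B_\omega$ is the set of infinite block sequences $(x_j)$ in $S_X\cap c_{00}(E_j)$ (i.e. $\max\mathrm{supp}_E(x_j)<\min\mathrm{supp}_E(x_{j+1})$), with the product of the norm topologies; closed refers to this topology. $\mathcal A\subset\mathcal B_\omega$ is closed under taking tails if $(x_{j+n})_{j\in\mathbb N}\in\mathcal A$ whenever $(x_j)\in\mathcal A$ and $n\in\mathbb N$. The $\mathcal A$-game: Player I chooses $k_1\in\mathbb N$, Player II chooses $x_1\in S_X\cap c_{00}(E_j)$ with $\min\mathrm{supp}_E(x_1)\ge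 k_1$; then Player I chooses $k_2>\max\mathrm{rg}_E(x_1)$, Player II chooses $x_2\in S_X\cap c_{00}(E_j)$ with $\min\mathrm{supp}_E(x_2)\ge k_2$, and so on indefinitely. Player I wins if the resulting sequence $(x_j)$ lies in $\mathcal A$. A winning strategy for Player I is a rule assigning to each finite sequence of previous moves of Player II her next legal choice $k_{n+1}$, such that every play following it results in a sequence in $\mathcal A$. *)

(* Defs.v *)
From HB Require Import structures.
From mathcomp Require Import all_boot all_order all_algebra.
From mathcomp Require Import all_classical all_reals all_analysis.
Set Implicit Arguments. Unset Strict Implicit. Unset Printing Implicit Defensive.
Import Order.TTheory GRing.Theory Num.Theory.
Import numFieldNormedType.Exports.
Local Open Scope classical_set_scope.
Local Open Scope ring_scope.

Section FMD.
Variables (R : realType) (X : normedModType R).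

Definition lin_span (A : set X) : set X :=
  [set x | exists n (c : 'I_n -> R) (v : 'I_n -> X),
     (forall i, A (v i)) /\ x = \sum_(i < n) c i *: v i].

Definition fin_dim_subspace (V : set X) : Prop :=
  exists n (v : 'I_n -> X), V = lin_span (range v).

Definition is_dual (f : X -> R) : Prop :=
  (forall (a : R) (x y : X), f (a *: x + y) = a * f x + f y) /\ continuous f.

Definition dual_norm_le1 (f : X -> R) : Prop := forall x, `|f x| <= `|x|.

Definition span_E (E : nat -> set X) (P : set nat) : set X :=
  lin_span (\bigcup_(j in P) E j).

Definition biorth (E : nat -> set X) (k : nat) : set (X -> R) :=
  [set f | is_dual f /\ forall j, j != k -> forall y, E j y -> f y = 0].

Definition dual_span (F : nat -> set (X -> R)) : set (X -> R) :=
  [set g | exists n (c : 'I_n -> R) (js : 'I_n -> nat) (fs : 'I_n -> X -> R),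
     (forall i, F (js i) (fs i)) /\ g = (fun x => \sum_(i < n) c i * fs i x)].

Definition is_FMD (E : nat -> set X) : Prop :=
  [/\ (forall k, fin_dim_subspace (E k)),
      closure (span_E E setT) = setT,
      (forall k, E k `&` closure (span_E E [set j | j != k]) = [set 0])
   & (forall x, (forall k f, biorth E k f -> f x = 0) -> x = 0)].

Definition one_norming (E : nat -> set X) : Prop :=
  forall x, ((`|x|)%:E <= ereal_sup
     [set (f x)%:E | f in dual_span (biorth E) `&` dual_norm_le1])%E.

Definition separable : Prop :=
  exists D : set X, countable D /\ closure D = setT.

Definition c00 (E : nat -> set X) : set X := span_E E setT.

Definition comp_E (E : nat -> set X) (x : X) (j : nat) (y : X) : Prop :=
  E j y /\ span_E E [set i | i != j] (x - y).

Definition supp_E (E : nat -> set X) (x : X) : set nat :=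
  [set j | exists2 y, comp_E E x j y & y != 0].

Definition unit_c00 (E : nat -> set X) (x : X) : Prop := `|x| = 1 /\ c00 E x.

Definition B_omega (E : nat -> set X) : set (nat -> X) :=
  [set xs | (forall n, unit_c00 E (xs n)) /\
     forall n a b, supp_E E (xs n) a -> supp_E E (xs n.+1) b -> (a < b)%N].

Definition closed_in_B (E : nat -> set X) (A : set (nat -> X)) : Prop :=
  exists C : set {ptws nat -> X}, closed C /\ A = B_omega E `&` C.

Definition tail_closed (A : set (nat -> X)) : Prop :=
  forall xs n, A xs -> A (fun j => xs (j + n)%N).

Definition hist (xs : nat -> X) (n : nat) : seq X := mkseq xs n.

Definition II_move (E : nat -> set X) (k : nat) (x : X) : Prop :=
  unit_c00 E x /\ forall j, supp_E E x j -> (k <= j)%N.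

Definition follows (E : nat -> set X) (sigma : seq X -> nat) (xs : nat -> X) :=
  forall n, II_move E (sigma (hist xs n)) (xs n).

(* sigma always chooses legally: k_{n+1} > max rg_E(x_n) *)
Definition legal_strategy (E : nat -> set X) (sigma : seq X -> nat) : Prop :=
  forall xs n, (forall m, (m <= n)%N -> II_move E (sigma (hist xs m)) (xs m)) ->
    forall j, supp_E E (xs n) j -> (j < sigma (hist xs n.+1))%N.

Definition winning_I (E : nat -> set X) (A : set (nat -> X))
  (sigma : seq X -> nat) : Prop :=
  legal_strategy E sigma /\ forall xs, follows E sigma xs -> A xs.

Definition has_winning_I (E : nat -> set X) (A : set (nat -> X)) : Prop :=
  exists sigma, winning_I E A sigma.

End FMD.

(* Main.v *)
Require Import Defs.
From HB Require Import structures.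
From mathcomp Require Import all_boot all_order all_algebra.
From mathcomp Require Import all_classical all_reals all_analysis.
From mathcomp Require Import zify.
Import numFieldNormedType.Exports.
Local Open Scope classical_set_scope.
Set Implicit Arguments. Unset Strict Implicit.

Lemma ptws_closed_lim (R : realType) (X : normedModType R) (C : set {ptws nat -> X})
  (t : nat -> (nat -> X)) (xs : nat -> X) :
  closed C -> (forall N, C (t N)) -> (forall N j, (j < N)%N -> t N j = xs j) -> C xs.
Proof.
move=> cC Ct ag.
apply: (@closed_cvg nat {ptws nat -> X} \oo _ (t : nat -> {ptws nat -> X}) C cC).
  by apply: nearW.
apply/pointwise_cvgP => j.
apply: cvg_near_cst.
exists j.+1 => // N /= hN; exact: ag.
Qed.

Section Aux.
Variables (R : realType) (X : normedModType R).

Definition catf (ys : nat -> X) (n : nat) (xs : nat -> X) : nat -> X :=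
  fun i => if (i < n)%N then ys i else xs (i - n)%N.

Lemma hist_agree (f g : nat -> X) n :
  (forall i, (i < n)%N -> f i = g i) -> hist f n = hist g n.
Proof.
move=> H; rewrite /hist /mkseq; apply/eq_in_map => i; rewrite mem_iota => /andP[_].
by rewrite add0n => /H.
Qed.

Lemma catf_lo ys n xs i : (i < n)%N -> catf ys n xs i = ys i.
Proof. by rewrite /catf => ->. Qed.

Lemma catf_hi ys n xs k : catf ys n xs (n + k) = xs k.
Proof. by rewrite /catf ltnNge leq_addr /= addKn. Qed.

Lemma hist_catf_lo ys n xs j : (j <= n)%N -> hist (catf ys n xs) j = hist ys j.
Proof. move=> hj; apply: hist_agree => i hi; apply: catf_lo; lia. Qed.

Lemma hist_catf_hi ys n xs k :
  hist (catf ys n xs) (n + k) = hist ys n ++ hist xs k.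
Proof.
rewrite /hist /mkseq iotaD map_cat add0n; congr (_ ++ _).
  by apply/eq_in_map => i; rewrite mem_iota add0n => /andP[_ hi]; apply: catf_lo.
have -> : iota n k = iota (n + 0) k by rewrite addn0.
rewrite iotaDl -map_comp; apply: eq_map => i /=.
exact: catf_hi.
Qed.

End Aux.

Section Step.
Variables (R : realType) (X : normedModType R) (E : nat -> set X).
Variable (sigma : seq X -> nat).
Hypothesis Hleg : legal_strategy E sigma.

Lemma follows_catf ys n xs :
  follows E sigma ys ->
  (forall j, II_move E (sigma (hist ys n ++ hist xs j)) (xs j)) ->
  follows E sigma (catf ys n xs).
Proof.
move=> fy fx j; have [hj|hj] := ltnP j n.
  rewrite catf_lo // hist_catf_lo; [exact: fy | exact: ltnW].
have -> : j = (n + (j - n))%N by lia.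
by rewrite catf_hi hist_catf_hi; exact: fx.
Qed.

Lemma step (Am : set (nat -> X)) :
  Am `<=` B_omega E -> closed_in_B E Am -> tail_closed Am ->
  ~ has_winning_I E Am ->
  forall ys n, follows E sigma ys ->
  exists ys' n', [/\ follows E sigma ys', (n < n')%N,
    (forall i, (i < n)%N -> ys' i = ys i) &
    (forall zs, follows E sigma zs -> (forall i, (i < n')%N -> zs i = ys' i) -> ~ Am zs)].
Proof.
move=> AB [C [cC AC]] tA nW ys n fy.
pose tau := fun h => sigma (hist ys n ++ h).
have ltau : legal_strategy E tau.
  move=> xs k H a Ha.
  have := @Hleg (catf ys n xs) (n + k) _ a.
  rewrite catf_hi -addnS hist_catf_hi; apply => //.
  move=> j hj; have [hjn|hjn] := ltnP j n.
    rewrite catf_lo // hist_catf_lo; [exact: fy | exact: ltnW].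
  have -> : j = (n + (j - n))%N by lia.
  rewrite catf_hi hist_catf_hi; apply: H; lia.
have [xs [fx nAx]] : exists xs, follows E tau xs /\ ~ Am xs.
  apply: contrapT => hne; apply: nW; exists tau; split => // xs fx.
  apply: contrapT => nA; apply: hne; by exists xs.
set ys' := catf ys n xs.
have fy' : follows E sigma ys' by apply: follows_catf => // j; exact: fx.
have Bx : B_omega E xs.
  split=> [k|k a b Ha Hb]; first by case: (fx k).
  have h1 := ltau xs k (fun m _ => fx m) a Ha.
  case: (fx k.+1) => _ /(_ b Hb); lia.
have [N HN] : exists N, forall zs, follows E sigma zs ->
    (forall i, (i < n + N)%N -> zs i = ys' i) -> ~ Am zs.
  apply: contrapT => hne.
  have H : forall N, exists zs, (forall i, (i < n + N)%N -> zs i = ys' i) /\ Am zs.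
    move=> N; apply: contrapT => hn2; apply: hne; exists N => zs _ ag Az.
    by apply: hn2; exists zs.
  have [f Hf] := choice H.
  have : C xs.
    apply: (@ptws_closed_lim R X C (fun N j => f N (j + n)%N)) => //.
      move=> N; have := tA _ n (Hf N).2; rewrite AC => -[].
      done.
    move=> N j hj /=; rewrite (Hf N).1; last lia.
    by rewrite addnC /ys' catf_hi.
  by move=> Cx; apply: nAx; rewrite AC.
exists ys', (n + N).+1; split => //.
- lia.
- by move=> i hi; rewrite /ys' catf_lo.
- move=> zs fz ag; apply: HN => // i hi; apply: ag; lia.
Qed.

End Step.

Unset Implicit Arguments.

Theorem proposition6p6 (R : realType) (X : completeNormedModType R)
  (E : nat -> set X) (A : nat -> set (nat -> X)) :
  separable X -> is_FMD E -> one_norming E ->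
  (forall m, A m `<=` B_omega E) ->
  (forall m, closed_in_B E (A m)) ->
  (forall m, tail_closed (A m)) ->
  (forall m, A m `<=` A m.+1) ->
  has_winning_I E (\bigcup_m A m) ->
  exists m, has_winning_I E (A m).
Proof.
move=> _ _ _ AB cA tA _ [sigma [leg win]].
apply: contrapT => hne.
have nW : forall m, ~ has_winning_I E (A m) by move=> m hm; apply: hne; exists m.
have [ys0 fy0] : exists ys, follows E sigma ys.
  apply: contrapT => h; apply: (nW 0); exists sigma; split => // xs fx.
  by exfalso; apply: h; exists xs.
have H : forall p : nat * ((nat -> X) * nat), exists q : (nat -> X) * nat,
    follows E sigma p.2.1 ->
    [/\ follows E sigma q.1, (p.2.2 < q.2)%N,
    (forall i, (i < p.2.2)%N -> q.1 i = p.2.1 i) &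
    (forall zs, follows E sigma zs -> (forall i, (i < q.2)%N -> zs i = q.1 i) -> ~ A p.1 zs)].
  move=> [m [ys n]] /=.
  case: (pselect (follows E sigma ys)) => fy; last by exists (ys, n).
  have [ys' [n' Hs]] := step leg (AB m) (cA m) (tA m) (nW m) n fy.
  by exists (ys', n').
have [g Hg] := choice H.
pose st := fix st m := match m with 0 => (ys0, 0%N) | m'.+1 => g (m', st m') end.
have stS : forall m, st m.+1 = g (m, st m) by [].
have P1 : forall m, follows E sigma (st m).1.
  elim=> [|m IH] //; rewrite stS; by case: (Hg (m, st m) IH).
have P3 : forall m, ((st m).2 < (st m.+1).2)%N /\
    forall i, (i < (st m).2)%N -> (st m.+1).1 i = (st m).1 i.
  move=> m; rewrite stS; by case: (Hg (m, st m) (P1 m)).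
have P2 : forall m, (m <= (st m).2)%N.
  elim=> [|m IH] //; have := (P3 m).1; lia.
have P4 : forall k d i, (i < (st k).2)%N ->
    ((st k).2 <= (st (k + d)).2)%N /\ (st (k + d)).1 i = (st k).1 i.
  move=> k; elim=> [|d IH] i hi; first by rewrite addn0.
  have [h1 h2] := IH i hi; rewrite addnS.
  have [h3 h4] := P3 (k + d)%N.
  split; first lia.
  rewrite h4 //; lia.
pose zs := fun i => (st i.+1).1 i.
have ag : forall k i, (i < (st k).2)%N -> zs i = (st k).1 i.
  move=> k i hi; rewrite /zs; have [hk|hk] := leqP k i.+1.
    have -> : i.+1 = (k + (i.+1 - k))%N by lia.
    exact: (P4 k _ i hi).2.
  have -> : k = (i.+1 + (k - i.+1))%N by lia.
  symmetry; apply: (P4 i.+1 _ i _).2.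
  have := P2 i.+1; lia.
have fz : follows E sigma zs.
  move=> n.
  have -> : hist zs n = hist (st n.+1).1 n.
    apply: hist_agree => i hi; apply: ag; have := P2 n.+1; lia.
  exact: P1.
have [m _ Am] := win zs fz.
have [_ _ _ h] := Hg (m, st m) (P1 m).
apply: (h zs fz) => // i hi; rewrite -stS in hi *; exact: ag.
Qed.
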